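(* Assume $\clubsuit$. Then: (1) For every family $\{A_\alpha:\alpha<\omega_2\}$ of unbounded subsets of $\omega_1$ and every ordinal $\tau<\omega\cdot\omega$ there is $B\subseteq\omega_2$, $|B|=\aleph_2$, such that $\mathrm{otp}(\bigcap_{\alpha\in B}A_\alpha)\geq\tau$. (2) For every $\tau<\omega\cdot\omega$, $\binom{\omega_2}{\omega_1}\rightarrow\binom{\omega_2}{\tau}^{1,1}_{\aleph_0}$ holds.
   Context: $\clubsuit$ (tiltan) at $\aleph_1$: there is a sequence $\langle T_\alpha:\alpha\in\lim(\omega_1)\rangle$ such that each $T_\alpha$ is a cofinal subset of $\alpha$, and for every unbounded $A\subseteq\omega_1$ the set $\{\alpha: T_\alpha\subseteq A\}$ is stationary. The polarized relation $\binom{\alpha}{\beta}\rightarrow\binom{\gamma}{\delta}^{1,1}_\theta$ means: for every $c:\alpha\times\beta\to\theta$ there are $A\subseteq\alpha$ of order type $\gamma$ and $B\subseteq\beta$ of order type $\delta$ such that $c\restriction(A\times B)$ is constant. *)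

(* Defs.v *)
From Stdlib Require Import Arith Classical.

Section Defs.
Context {T : Type} (lt : T -> T -> Prop).

Definition le (x y : T) : Prop := x = y \/ lt x y.

Definition well_order : Prop :=
  well_founded lt /\ (forall x, ~ lt x x) /\
  (forall x y z, lt x y -> lt y z -> lt x z) /\
  (forall x y, lt x y \/ x = y \/ lt y x).

(* (T, lt) is (isomorphic to) omega_1: an uncountable well-order all of whose
   proper initial segments are countable *)
Definition is_omega1 : Prop :=
  well_order /\
  (~ exists f : T -> nat, forall x y, f x = f y -> x = y) /\
  (forall a, exists f : T -> nat,
      forall x y, lt x a -> lt y a -> f x = f y -> x = y).

Definition is_limit (a : T) : Prop :=
  (exists y, lt y a) /\ (forall y, lt y a -> exists z, lt y z /\ lt z a).

Definition cofinal_in (S : T -> Prop) (a : T) : Prop :=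
  (forall y, S y -> lt y a) /\ (forall y, lt y a -> exists z, S z /\ le y z).

Definition unbounded (A : T -> Prop) : Prop :=
  forall x, exists y, A y /\ le x y.

Definition club (C : T -> Prop) : Prop :=
  unbounded C /\
  (forall a, is_limit a ->
     (forall y, lt y a -> exists z, C z /\ lt y z /\ lt z a) -> C a).

Definition stationary (S : T -> Prop) : Prop :=
  forall C, club C -> exists a, S a /\ C a.

Definition clubsuit : Prop :=
  exists Tseq : T -> T -> Prop,
    (forall a, is_limit a -> cofinal_in (Tseq a) a) /\
    (forall A, unbounded A ->
       stationary (fun a => is_limit a /\ forall x, Tseq a x -> A x)).

(* The ordinal tau = omega*n + m, with elements (i,k), i<n, k arbitrary,
   followed by (n,k), k<m; ordered lexicographically. *)
Definition in_tau (n m : nat) (p : nat * nat) : Prop :=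
  fst p < n \/ (fst p = n /\ snd p < m).

Definition lex_lt (p q : nat * nat) : Prop :=
  fst p < fst q \/ (fst p = fst q /\ snd p < snd q).

Definition tau_incr (n m : nat) (f : nat * nat -> T) : Prop :=
  forall p q, in_tau n m p -> in_tau n m q -> lex_lt p q -> lt (f p) (f q).

Definition otp_ge_tau (n m : nat) (X : T -> Prop) : Prop :=
  exists f : nat * nat -> T, tau_incr n m f /\ (forall p, in_tau n m p -> X (f p)).

Definition otp_eq_tau (n m : nat) (X : T -> Prop) : Prop :=
  exists f : nat * nat -> T, tau_incr n m f /\
    (forall p, in_tau n m p -> X (f p)) /\
    (forall x, X x -> exists p, in_tau n m p /\ f p = x).

Definition otp_full (A : T -> Prop) : Prop :=
  exists f : T -> T, (forall x y, lt x y -> lt (f x) (f y)) /\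
    (forall x, A (f x)) /\ (forall y, A y -> exists x, f x = y).
End Defs.

(* (U, ltU) is omega_2, relative to (T, ltT) being omega_1:
   a well-order of size > aleph_1 all of whose initial segments have size <= aleph_1 *)
Definition is_omega2 {T U : Type} (ltT : T -> T -> Prop) (ltU : U -> U -> Prop) : Prop :=
  well_order ltU /\
  (~ exists f : U -> T, forall x y, f x = f y -> x = y) /\
  (forall a, exists f : U -> T,
      forall x y, ltU x a -> ltU y a -> f x = f y -> x = y).

(* B, a subset of U (= omega_2), has cardinality aleph_2, i.e. does not inject into omega_1 *)
Definition card_aleph2 {T U : Type} (B : U -> Prop) : Prop :=
  ~ exists f : U -> T, forall x y, B x -> B y -> f x = f y -> x = y.

(* Main.v *)
Require Import Defs.
From Stdlib Require Import Arith Classical.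
From Stdlib Require Import ClassicalEpsilon FunctionalExtensionality Cantor Lia.

Definition inj_on {X Y : Type} (S : X -> Prop) (f : X -> Y) : Prop :=
  forall x y, S x -> S y -> f x = f y -> x = y.

Lemma choice' {A B : Type} (P : A -> B -> Prop) :
  (forall a, exists b, P a b) -> exists f : A -> B, forall a, P a (f a).
Proof.
  intros H. exists (fun a => proj1_sig (constructive_indefinite_description _ (H a))).
  intro a. exact (proj2_sig (constructive_indefinite_description _ (H a))).
Qed.

Lemma npair_inj a b c d : Cantor.to_nat (a, b) = Cantor.to_nat (c, d) -> a = c /\ b = d.
Proof.
  intro H. assert (E := f_equal Cantor.of_nat H).
  rewrite !Cantor.cancel_of_to in E. inversion E. auto.
Qed.

Lemma wf_rec_exists {X Y : Type} (R : X -> X -> Prop) (wf : well_founded R) (y0 : Y)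
  (Q : X -> (X -> Y) -> Y -> Prop) :
  (forall x g1 g2, (forall y, R y x -> g1 y = g2 y) -> forall v, Q x g1 v -> Q x g2 v) ->
  (forall x g, exists v, Q x g v) ->
  exists F : X -> Y, forall x, Q x F (F x).
Proof.
  intros Hloc Hex.
  set (ext := fun x (h : forall y, R y x -> Y) (y : X) =>
    match excluded_middle_informative (R y x) with
    | left p => h y p | right _ => y0 end).
  set (body := fun x (h : forall y, R y x -> Y) =>
    proj1_sig (constructive_indefinite_description _ (Hex x (ext x h)))).
  set (F := Fix wf (fun _ => Y) body).
  exists F. intro x.
  assert (EF : F x = body x (fun y _ => F y)).
  { unfold F. apply (Fix_eq wf (fun _ => Y) body).
    intros x0 f g Hfg.
    assert (f = g) as ->.
    { apply functional_extensionality_dep; intro y.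
      apply functional_extensionality_dep; intro p. apply Hfg. }
    reflexivity. }
  rewrite EF.
  apply (Hloc x (ext x (fun y _ => F y))).
  - intros y Ry. unfold ext. destruct (excluded_middle_informative (R y x)); tauto.
  - exact (proj2_sig (constructive_indefinite_description _ (Hex x _))).
Qed.

Section TSide.
Variables (T : Type) (lt : T -> T -> Prop) (HT : is_omega1 lt).

Lemma T_wf : well_founded lt. Proof. apply HT. Qed.
Lemma T_irr x : ~ lt x x. Proof. apply HT. Qed.
Lemma T_trans x y z : lt x y -> lt y z -> lt x z. Proof. apply HT. Qed.
Lemma T_tot x y : lt x y \/ x = y \/ lt y x. Proof. apply HT. Qed.
Lemma T_unc : ~ exists f : T -> nat, forall x y, f x = f y -> x = y. Proof. apply HT. Qed.
Lemma T_cnt a : exists f : T -> nat, forall x y, lt x a -> lt y a -> f x = f y -> x = y.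
Proof. apply HT. Qed.

Lemma T_inh : inhabited T.
Proof.
  destruct (classic (inhabited T)) as [H|H]; auto.
  exfalso. apply T_unc. exists (fun _ => 0). intros x. exfalso. apply H. exact (inhabits x).
Qed.

Lemma T_le_lt_trans x y z : le lt x y -> lt y z -> lt x z.
Proof. intros [->|H] H2; auto. eapply T_trans; eauto. Qed.
Lemma T_lt_le_trans x y z : lt x y -> le lt y z -> lt x z.
Proof. intros H [<-|H2]; auto. eapply T_trans; eauto. Qed.
Lemma T_le_trans x y z : le lt x y -> le lt y z -> le lt x z.
Proof. intros [->|H] H2; auto. right. eapply T_lt_le_trans; eauto. Qed.
Lemma T_not_lt x y : ~ lt x y -> le lt y x.
Proof. intros H. destruct (T_tot x y) as [|[|]]; [tauto|left; auto|right; auto]. Qed.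

Lemma T_seg a : exists f : T -> nat, inj_on (fun y => le lt y a) f.
Proof.
  destruct (T_cnt a) as [f Hf].
  exists (fun y => if excluded_middle_informative (y = a) then 0 else S (f y)).
  intros x y Hx Hy.
  destruct (excluded_middle_informative (x = a)), (excluded_middle_informative (y = a));
    intros E; try congruence.
  injection E; intro E'. destruct Hx, Hy; try congruence. apply Hf; auto.
Qed.

Lemma T_bounded (S : T -> Prop) (h : T -> nat) : inj_on S h ->
  exists b, forall s, S s -> lt s b.
Proof.
  intros Hh. apply NNPP; intro Hn.
  assert (H1 : forall b, exists s, S s /\ le lt b s).
  { intro b. apply NNPP; intro H2. apply Hn. exists b. intros s Ss.
    apply NNPP; intro H3. apply H2. exists s. split; auto. apply T_not_lt; auto. }
  destruct (choice' _ H1) as [sb Hsb].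
  destruct (choice' _ T_seg) as [fs Hfs].
  apply T_unc. exists (fun x => Cantor.to_nat (h (sb x), fs (sb x) x)).
  intros x y E. apply npair_inj in E. destruct E as [E1 E2].
  destruct (Hsb x) as [Sx Lx]. destruct (Hsb y) as [Sy Ly].
  assert (Es : sb x = sb y) by (apply Hh; auto).
  rewrite <- Es in E2, Ly. apply (Hfs (sb x)); auto.
Qed.

Lemma T_succ x : exists y, lt x y.
Proof.
  destruct (T_bounded (fun y => y = x) (fun _ => 0)) as [b Hb].
  - intros a c -> ->; auto.
  - exists b. auto.
Qed.


Lemma T_iter_le (Sc : T -> T) (HS : forall x, lt x (Sc x)) k x : le lt x (Nat.iter k Sc x).
Proof.
  induction k; simpl. left; auto. right. eapply T_le_lt_trans; eauto.
Qed.

Lemma T_iter_lt (Sc : T -> T) (HS : forall x, lt x (Sc x)) j k x : j < k ->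
  lt (Nat.iter j Sc x) (Nat.iter k Sc x).
Proof.
  intros H. induction H; simpl.
  - apply HS.
  - eapply T_trans; eauto.
Qed.

Lemma T_Pnat : exists P : T -> nat -> T, forall x k y j, P x k = P y j -> x = y /\ k = j.
Proof.
  destruct (choice' _ T_succ) as [Sc HS].
  destruct T_inh as [t0].
  destruct (choice' _ T_cnt) as [fc Hfc].
  destruct (wf_rec_exists lt T_wf t0
    (fun x g v => forall x' k, lt x' x -> lt (Nat.iter k Sc (g x')) v)) as [F HF].
  - intros x g1 g2 Hg v H x' k Hx'. rewrite <- Hg; auto.
  - intros x g.
    set (S := fun w => exists x' k, lt x' x /\ w = Nat.iter k Sc (g x')).
    assert (Hc : forall w, exists p : T * nat, S w ->
       lt (fst p) x /\ w = Nat.iter (snd p) Sc (g (fst p))).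
    { intro w. destruct (classic (S w)) as [[x' [k [H1 H2]]]|Hn].
      - exists (x', k). intros _. simpl. auto.
      - exists (t0, 0). tauto. }
    destruct (choice' _ Hc) as [c Hcc].
    destruct (T_bounded S (fun w => Cantor.to_nat (fc x (fst (c w)), snd (c w)))) as [b Hb].
    + intros w1 w2 S1 S2 E. apply npair_inj in E. destruct E as [E1 E2].
      destruct (Hcc w1 S1) as [L1 ->]. destruct (Hcc w2 S2) as [L2 ->].
      rewrite E2. f_equal. f_equal. apply (Hfc x); auto.
    + exists b. intros x' k Hx'. apply Hb. exists x', k. auto.
  - exists (fun x k => Nat.iter k Sc (F x)).
    assert (A : forall x k y j, lt x y -> Nat.iter k Sc (F x) <> Nat.iter j Sc (F y)).
    { intros x k y j H E. apply (T_irr (Nat.iter k Sc (F x))).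
      eapply T_lt_le_trans. apply (HF y x k H). rewrite E. apply T_iter_le; auto. }
    intros x k y j E. destruct (T_tot x y) as [H|[<-|H]].
    + exfalso. eapply A; eauto.
    + split; auto. destruct (Nat.lt_total k j) as [H|[H|H]]; auto; exfalso.
      * apply (T_irr (Nat.iter k Sc (F x))). rewrite E at 2. apply T_iter_lt; auto.
      * apply (T_irr (Nat.iter j Sc (F x))). rewrite <- E at 2. apply T_iter_lt; auto.
    + exfalso. eapply A; eauto.
Qed.

Lemma T_Pair : exists P : T -> T -> T, forall x y x' y', P x y = P x' y' -> x = x' /\ y = y'.
Proof.
  destruct T_Pnat as [Pn HPn].
  destruct (choice' _ T_seg) as [fs Hfs].
  set (mx := fun x y => if excluded_middle_informative (lt x y) then y else x).
  assert (Hmx : forall x y, le lt x (mx x y) /\ le lt y (mx x y)).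
  { intros x y. unfold mx. destruct (excluded_middle_informative (lt x y)).
    - split; [right|left]; auto.
    - split; [left; auto|]. apply T_not_lt; auto. }
  exists (fun x y => Pn (mx x y) (Cantor.to_nat (fs (mx x y) x, fs (mx x y) y))).
  intros x y x' y' E. apply HPn in E. destruct E as [E1 E2].
  apply npair_inj in E2. destruct E2 as [E2 E3].
  destruct (Hmx x y), (Hmx x' y'). rewrite <- E1 in *.
  split; apply (Hfs (mx x y)); auto.
Qed.

Lemma T_seq (P : T -> Prop) x0 : P x0 -> (forall x, P x -> exists y, P y /\ lt x y) ->
  exists s : nat -> T, (forall k, P (s k)) /\ (forall j k, j < k -> lt (s j) (s k)).
Proof.
  intros H0 Hst.
  assert (H : forall x, exists y, P x -> P y /\ lt x y).
  { intro x. destruct (classic (P x)) as [Px|Px].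
    - destruct (Hst x Px) as [y Hy]. exists y; auto.
    - exists x. tauto. }
  destruct (choice' _ H) as [nx Hnx].
  assert (HP : forall k, P (Nat.iter k nx x0)).
  { induction k; simpl; auto. apply Hnx; auto. }
  exists (fun k => Nat.iter k nx x0). split; auto.
  intros j k Hjk. induction Hjk; simpl.
  - apply Hnx; auto.
  - eapply T_trans; eauto. apply Hnx; auto.
Qed.

End TSide.

Section USide.
Variables (T U : Type) (ltT : T -> T -> Prop) (ltU : U -> U -> Prop)
  (HT : is_omega1 ltT) (HU : is_omega2 ltT ltU).

Lemma U_wf : well_founded ltU. Proof. apply HU. Qed.
Lemma U_irr x : ~ ltU x x. Proof. apply HU. Qed.
Lemma U_trans x y z : ltU x y -> ltU y z -> ltU x z. Proof. apply HU. Qed.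
Lemma U_tot x y : ltU x y \/ x = y \/ ltU y x. Proof. apply HU. Qed.
Lemma U_big : @card_aleph2 T U (fun _ => True).
Proof. intros [f Hf]. apply HU. exists f. intros; apply Hf; auto. Qed.
Lemma U_cnt a : exists f : U -> T, inj_on (fun x => ltU x a) f.
Proof. destruct HU as [_ [_ H]]. apply H. Qed.
Lemma U_not_lt x y : ~ ltU x y -> le ltU y x.
Proof. intros H. destruct (U_tot x y) as [|[|]]; [tauto|left; auto|right; auto]. Qed.

Lemma big_nonempty B : @card_aleph2 T U B -> exists a, B a.
Proof.
  intros H. apply NNPP; intro Hn. apply H.
  destruct (T_inh _ _ HT) as [t0]. exists (fun _ => t0).
  intros x y Bx. exfalso. apply Hn. eauto.
Qed.

Lemma U_seg a : exists f : U -> T, inj_on (fun y => le ltU y a) f.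
Proof.
  destruct (U_cnt a) as [f Hf]. destruct (T_Pnat _ _ HT) as [Pn HPn].
  destruct (T_inh _ _ HT) as [t0].
  exists (fun y => if excluded_middle_informative (y = a) then Pn t0 0 else Pn (f y) 1).
  intros x y Hx Hy.
  destruct (excluded_middle_informative (x = a)), (excluded_middle_informative (y = a));
    intros E; try congruence; apply HPn in E; destruct E as [E1 E2]; try discriminate.
  destruct Hx, Hy; try congruence. apply Hf; auto.
Qed.

Lemma U_bounded (S : U -> Prop) (h : U -> T) : inj_on S h ->
  exists b, forall s, S s -> ltU s b.
Proof.
  intros Hh. apply NNPP; intro Hn.
  assert (H1 : forall b, exists s, S s /\ le ltU b s).
  { intro b. apply NNPP; intro H2. apply Hn. exists b. intros s Ss.
    apply NNPP; intro H3. apply H2. exists s. split; auto. apply U_not_lt; auto. }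
  destruct (choice' _ H1) as [sb Hsb].
  destruct (choice' _ U_seg) as [fs Hfs].
  destruct (T_Pair _ _ HT) as [P HP].
  apply U_big. exists (fun x => P (h (sb x)) (fs (sb x) x)).
  intros x y _ _ E. apply HP in E. destruct E as [E1 E2].
  destruct (Hsb x) as [Sx Lx]. destruct (Hsb y) as [Sy Ly].
  assert (Es : sb x = sb y) by (apply Hh; auto).
  rewrite <- Es in E2, Ly. apply (Hfs (sb x)); auto.
Qed.

Lemma U_PH (B : U -> Prop) (g : U -> T) : @card_aleph2 T U B ->
  exists t, @card_aleph2 T U (fun a => B a /\ g a = t).
Proof.
  intros HB. apply NNPP; intro Hn.
  assert (H1 : forall t, exists f : U -> T, inj_on (fun a => B a /\ g a = t) f).
  { intro t. apply NNPP; intro H2. apply Hn. exists t. intros [f Hf]. apply H2.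
    exists f. intros x y Hx Hy. apply Hf; auto. }
  destruct (choice' _ H1) as [F HF].
  destruct (T_Pair _ _ HT) as [P HP].
  apply HB. exists (fun a => P (g a) (F (g a) a)).
  intros x y Bx By E. apply HP in E. destruct E as [E1 E2].
  rewrite <- E1 in E2. apply (HF (g x)); auto.
Qed.

Lemma U_PHnat (B : U -> Prop) (g : U -> nat) : @card_aleph2 T U B ->
  exists k, @card_aleph2 T U (fun a => B a /\ g a = k).
Proof.
  intros HB. destruct (T_Pnat _ _ HT) as [Pn HPn]. destruct (T_inh _ _ HT) as [t0].
  destruct (U_PH B (fun a => Pn t0 (g a)) HB) as [t Ht].
  assert (Ha := big_nonempty _ Ht). destruct Ha as [a [Ba Ea]].
  exists (g a). intros [f Hf]. apply Ht. exists f. intros x y [Bx Ex] [By Ey].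
  apply Hf; split; auto.
  - rewrite <- Ea in Ex. apply HPn in Ex. tauto.
  - rewrite <- Ea in Ey. apply HPn in Ey. tauto.
Qed.


Lemma U_least (P : U -> Prop) x0 : P x0 -> exists m, P m /\ forall z, P z -> le ltU m z.
Proof.
  intros H0. apply NNPP; intro Hn.
  assert (forall x, ~ P x).
  { intro x. induction x as [x IH] using (well_founded_ind U_wf). intro Px.
    apply Hn. exists x. split; auto. intros z Pz. apply NNPP; intro Hz.
    destruct (U_tot x z) as [H|[H|H]].
    - apply Hz. right; auto.
    - apply Hz. left; auto.
    - exact (IH z H Pz). }
  exact (H x0 H0).
Qed.

Lemma U_enum (B : U -> Prop) : @card_aleph2 T U B -> otp_full ltU B.
Proof.
  intros HB. destruct (big_nonempty _ HB) as [u0 _].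
  destruct (choice' _ U_cnt) as [fc Hfc].
  destruct (wf_rec_exists ltU U_wf u0
    (fun x g v => B v /\ (forall x', ltU x' x -> ltU (g x') v) /\
       (forall z, B z -> (forall x', ltU x' x -> ltU (g x') z) -> le ltU v z))) as [F HF].
  - intros x g1 g2 Hg v [H1 [H2 H3]]. split; [auto|split].
    + intros x' Hx'. rewrite <- Hg; auto.
    + intros z Bz Hz. apply H3; auto. intros x' Hx'. rewrite Hg; auto.
  - intros x g.
    set (S := fun w => exists x', ltU x' x /\ w = g x').
    assert (Hc : forall w, exists p : U, S w -> ltU p x /\ w = g p).
    { intro w. destruct (classic (S w)) as [[x' [H1 H2]]|Hn].
      - exists x'. auto.
      - exists u0. tauto. }
    destruct (choice' _ Hc) as [c Hcc].
    destruct (U_bounded S (fun w => fc x (c w))) as [b Hb].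
    + intros w1 w2 S1 S2 E.
      destruct (Hcc w1 S1) as [L1 E1]. destruct (Hcc w2 S2) as [L2 E2].
      rewrite E1, E2. f_equal. apply (Hfc x); auto.
    + assert (Hz : exists z, B z /\ le ltU b z).
      { apply NNPP; intro Hn. apply HB. exists (fc b). intros y1 y2 B1 B2 E.
        apply (Hfc b); [ | | exact E].
        - apply NNPP; intro H; apply Hn; exists y1; split; auto; apply U_not_lt; auto.
        - apply NNPP; intro H; apply Hn; exists y2; split; auto; apply U_not_lt; auto. }
      destruct Hz as [z [Bz Lz]].
      destruct (U_least (fun z => B z /\ forall x', ltU x' x -> ltU (g x') z) z) as [m [[Bm Hm] Lm]].
      * split; auto. intros x' Hx'.
        assert (Sg : S (g x')) by (exists x'; auto).
        specialize (Hb _ Sg). destruct Lz as [<-|Lz]; auto. eapply U_trans; eauto.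
      * exists m. split; [exact Bm|split; [exact Hm|]]. intros z0 B0 H0. apply Lm. auto.
  - exists F. split; [|split].
    + intros x y Hxy. apply (proj1 (proj2 (HF y))); auto.
    + intro x. apply (HF x).
    + intros y By. apply NNPP; intro Hn.
      assert (Hlt : forall x, ltU (F x) y).
      { intro x. induction x as [x IH] using (well_founded_ind U_wf).
        destruct (HF x) as [_ [_ H3]]. destruct (H3 y By IH) as [E|L]; auto.
        exfalso. apply Hn. eauto. }
      apply U_big. exists (fun x => fc y (F x)). intros x1 x2 _ _ E.
      apply (Hfc y) in E; auto.
      destruct (U_tot x1 x2) as [H|[H|H]]; auto; exfalso.
      * apply (U_irr (F x2)). rewrite <- E at 1. apply (proj1 (proj2 (HF x2))); auto.
      * apply (U_irr (F x1)). rewrite E at 1. apply (proj1 (proj2 (HF x1))); auto.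
Qed.

End USide.

Lemma in_tau0 n p : in_tau n 0 p <-> fst p < n.
Proof. unfold in_tau. split; [intros [H|[_ H]]; [auto|inversion H] | auto]. Qed.

Section Main.
Variables (T U : Type) (ltT : T -> T -> Prop) (ltU : U -> U -> Prop)
  (HT : is_omega1 ltT) (HU : is_omega2 ltT ltU)
  (Ts : T -> T -> Prop)
  (HTs1 : forall a, is_limit ltT a -> cofinal_in ltT (Ts a) a)
  (HTs2 : forall A, unbounded ltT A ->
       stationary ltT (fun a => is_limit ltT a /\ forall x, Ts a x -> A x)).

Lemma above d x : exists y, ltT d y /\ le ltT x y.
Proof.
  destruct (T_tot _ _ HT d x) as [H|[<-|H]].
  - exists x. split; auto. left; auto.
  - destruct (T_succ _ _ HT d) as [y Hy]. exists y. split; auto. right; auto.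
  - destruct (T_succ _ _ HT d) as [y Hy]. exists y. split; auto.
    right. eapply (T_trans _ _ HT); eauto.
Qed.

Lemma club_above d : club ltT (fun y => ltT d y).
Proof.
  split.
  - intro x. destruct (above d x) as [y [H1 H2]]. exists y; auto.
  - intros a [[y Hy] _] H. destruct (H y Hy) as [z [H1 [_ H3]]].
    eapply (T_trans _ _ HT); eauto.
Qed.

Lemma unb_above (A : T -> Prop) d : unbounded ltT A -> unbounded ltT (fun y => A y /\ ltT d y).
Proof.
  intros HA x. destruct (above d x) as [e [H1 H2]]. destruct (HA e) as [y [Ay Ly]].
  exists y. split; [split; auto|].
  - eapply (T_lt_le_trans _ _ HT); eauto.
  - eapply (T_le_trans _ _ HT); eauto.
Qed.

Lemma guess (A : T -> Prop) d : unbounded ltT A ->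
  exists δ, is_limit ltT δ /\ forall x, Ts δ x -> A x /\ ltT d x.
Proof.
  intros HA. destruct (HTs2 _ (unb_above A d HA) _ (club_above d)) as [δ [[H1 H2] _]].
  exists δ. auto.
Qed.

Lemma seq_in δ : is_limit ltT δ -> exists s : nat -> T,
  (forall k, Ts δ (s k)) /\ (forall j k, j < k -> ltT (s j) (s k)).
Proof.
  intros Hl. destruct (HTs1 δ Hl) as [C1 C2]. destruct Hl as [[y Hy] Hl].
  destruct (C2 y Hy) as [x0 [Hx0 _]].
  apply (T_seq _ _ HT _ x0 Hx0).
  intros x Hx. destruct (Hl x (C1 x Hx)) as [z [Z1 Z2]].
  destruct (C2 z Z2) as [w [Hw Lw]]. exists w. split; auto.
  eapply (T_lt_le_trans _ _ HT); eauto.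
Qed.

Lemma iter_main N : forall (B0 : U -> Prop) (A : U -> T -> Prop),
  @card_aleph2 T U B0 -> (forall a, B0 a -> unbounded ltT (A a)) ->
  exists (B : U -> Prop) (f : nat * nat -> T) (d : T),
    @card_aleph2 T U B /\ (forall a, B a -> B0 a) /\ tau_incr ltT N 0 f /\
    (forall p, in_tau N 0 p -> ltT (f p) d /\ forall a, B a -> A a (f p)).
Proof.
  destruct (T_inh _ _ HT) as [t0].
  induction N as [|N IH]; intros B0 A HB0 HA.
  - exists B0, (fun _ => t0), t0. split; [auto|split; [auto|split]].
    + intros p q Hp. apply in_tau0 in Hp. inversion Hp.
    + intros p Hp. apply in_tau0 in Hp. inversion Hp.
  - destruct (IH B0 A HB0 HA) as [B [f [d [HB [HBB0 [Hf Hfd]]]]]].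
    assert (Hg : forall a, exists δ, B a ->
       is_limit ltT δ /\ forall x, Ts δ x -> A a x /\ ltT d x).
    { intro a. destruct (classic (B a)) as [Ba|Ba].
      - destruct (guess (A a) d (HA a (HBB0 a Ba))) as [δ Hδ]. exists δ; auto.
      - exists t0. tauto. }
    destruct (choice' _ Hg) as [G HG].
    destruct (U_PH _ _ _ HT B G HB) as [δ Hδ].
    destruct (big_nonempty _ _ _ HT _ Hδ) as [a0 [Ba0 Ga0]].
    destruct (HG a0 Ba0) as [Hlim HTa0]. rewrite Ga0 in Hlim, HTa0.
    destruct (seq_in δ Hlim) as [s [Hs1 Hs2]].
    destruct (HTs1 δ Hlim) as [C1 _].
    assert (Hdδ : ltT d δ).
    { eapply (T_trans _ _ HT). apply (HTa0 _ (Hs1 0)). apply C1, Hs1. }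
    exists (fun a => B a /\ G a = δ), (fun p => if fst p <? N then f p else s (snd p)), δ.
    split; [auto|split; [intros a [Ba _]; auto|split]].
    + intros p q Hp Hq Hpq. apply in_tau0 in Hp, Hq.
      destruct (Nat.ltb_spec (fst p) N), (Nat.ltb_spec (fst q) N).
      * apply Hf; auto; apply in_tau0; auto.
      * eapply (T_trans _ _ HT). apply (Hfd p). apply in_tau0; auto.
        apply (HTa0 _ (Hs1 _)).
      * exfalso. destruct Hpq as [H1|[H1 H2]]; lia.
      * apply Hs2. destruct Hpq as [H1|[H1 H2]]; [lia|auto].
    + intros p Hp. apply in_tau0 in Hp.
      destruct (Nat.ltb_spec (fst p) N).
      * destruct (Hfd p) as [F1 F2]. apply in_tau0; auto.
        split. eapply (T_trans _ _ HT); eauto. intros a [Ba _]. auto.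
      * split. apply C1, Hs1. intros a [Ba Ga]. destruct (HG a Ba) as [_ HH].
        rewrite Ga in HH. apply HH. apply Hs1.
Qed.

End Main.

Lemma nat_seq_bounded (T : Type) (lt : T -> T -> Prop) (HT : is_omega1 lt) (g : nat -> T) :
  exists b, forall k, lt (g k) b.
Proof.
  assert (Hc : forall w, exists k : nat, (exists j, w = g j) -> w = g k).
  { intro w. destruct (classic (exists j, w = g j)) as [[j Hj]|Hn].
    - exists j; auto.
    - exists 0. tauto. }
  destruct (choice' _ Hc) as [ch Hch].
  destruct (T_bounded _ _ HT (fun w => exists j, w = g j) ch) as [b Hb].
  - intros x y Hx Hy E. rewrite (Hch x Hx), (Hch y Hy), E. reflexivity.
  - exists b. intro k. apply Hb. eauto.
Qed.

Lemma tau_mono (T : Type) (lt : T -> T -> Prop) n m p : in_tau n m p -> in_tau (S n) 0 p.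
Proof. intros [H|[H _]]; apply in_tau0; lia. Qed.

Theorem mainTheorem5 (T U : Type) (ltT : T -> T -> Prop) (ltU : U -> U -> Prop)
  (HT : is_omega1 ltT) (HU : is_omega2 ltT ltU) (Hclub : clubsuit ltT) :
  (forall (A : U -> T -> Prop), (forall a, unbounded ltT (A a)) ->
     forall n m : nat, exists B : U -> Prop,
       @card_aleph2 T U B /\
       otp_ge_tau ltT n m (fun x => forall a, B a -> A a x)) /\
  (forall (n m : nat) (c : U -> T -> nat),
     exists (A : U -> Prop) (B : T -> Prop),
       otp_full ltU A /\ otp_eq_tau ltT n m B /\
       exists k : nat, forall a b, A a -> B b -> c a b = k).
Proof.
  destruct Hclub as [Ts [HTs1 HTs2]].
  split.
  - intros A HA n m.
    destruct (iter_main T U ltT HT Ts HTs1 HTs2 (S n) (fun _ => True) A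
      (U_big _ _ _ _ HU) (fun a _ => HA a)) as [B [f [d [HB [_ [Hf Hfd]]]]]].
    exists B. split; auto. exists f. split.
    + intros p q Hp Hq. apply Hf; eapply tau_mono; eauto.
    + intros p Hp a Ba. apply (Hfd p); auto. eapply tau_mono; eauto.
  - intros n m c.
    assert (HK : forall a, exists k, unbounded ltT (fun y => c a y = k)).
    { intro a. apply NNPP; intro Hn.
      assert (H1 : forall k, exists x, forall y, c a y = k -> ~ le ltT x y).
      { intro k. apply NNPP; intro H2. apply Hn. exists k. intro x.
        apply NNPP; intro H3. apply H2. exists x. intros y E L. apply H3. eauto. }
      destruct (choice' _ H1) as [bk Hbk].
      destruct (nat_seq_bounded _ _ HT bk) as [b Hb].
      apply (Hbk (c a b) b eq_refl). right. apply Hb. }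
    destruct (choice' _ HK) as [K HKK].
    destruct (U_PHnat _ _ _ HT (fun _ => True) K (U_big _ _ _ _ HU)) as [k Hk].
    destruct (iter_main T U ltT HT Ts HTs1 HTs2 (S n) _ (fun a y => c a y = K a) Hk
      (fun a _ => HKK a)) as [B [f [d [HB [HBB1 [Hf Hfd]]]]]].
    exists B, (fun y => exists p, in_tau n m p /\ f p = y).
    split; [apply (U_enum _ _ _ _ HT HU B HB)|split].
    + exists f. split; [|split].
      * intros p q Hp Hq. apply Hf; eapply tau_mono; eauto.
      * intros p Hp. eauto.
      * intros x [p [Hp E]]. eauto.
    + exists k. intros a b Ba [p [Hp <-]].
      destruct (HBB1 a Ba) as [_ Ek]. rewrite <- Ek.
      apply (Hfd p); auto. eapply tau_mono; eauto.
Qed.
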